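(* Let $x\in\mathbb{R}$ and let $\theta\colon[x,+\infty)\to\mathbb{R}$ be a continuous sublinear function. If $y$ is a real number with $y<\theta(t)$ for every $t\in[x,+\infty)$, then the set $$E(x,y,\theta)=\left\{t>x\ \middle|\ \forall s\in[x,t],\ \theta(s)\ge\frac{\theta(t)-y}{t-x}(s-x)+y\right\}$$ is not bounded above.
   Context: A function $\theta$ is sublinear if $\theta(t)=o(t)$ as $t\to+\infty$. *)

(* Defs.v *)
From HB Require Import structures.
From mathcomp Require Import all_boot all_order all_algebra.
From mathcomp Require Import all_classical all_reals all_analysis.
Set Implicit Arguments. Unset Strict Implicit. Unset Printing Implicit Defensive.
Import Order.TTheory GRing.Theory Num.Theory.
Import numFieldNormedType.Exports.
Local Open Scope classical_set_scope.
Local Open Scope ring_scope.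

Definition Eset (R : realType) (x y : R) (theta : R -> R) : set R :=
  [set t | x < t /\
     forall s, x <= s <= t -> (theta t - y) / (t - x) * (s - x) + y <= theta s].

(* Main.v *)
Require Import Defs.
From HB Require Import structures.
From mathcomp Require Import all_boot all_order all_algebra.
From mathcomp Require Import all_classical all_reals all_analysis.
From mathcomp Require Import lra.
Import Order.TTheory GRing.Theory Num.Theory.
Import numFieldNormedType.Exports.
Local Open Scope classical_set_scope.
Local Open Scope ring_scope.

Theorem lemma3p1 (R : realType) (x y : R) (theta : R -> R)
  (hcont : {within `[x, +oo[, continuous theta})
  (hsub : theta t / t @[t --> +oo] --> 0)
  (hy : forall t, x <= t -> y < theta t) :
  ~ has_ubound (Eset x y theta).
Proof.
move=> [M hM].
have [hin _] := (continuous_within_itvcyP x theta).1 hcont.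
set b := Num.max M x + 1.
have h1 : x <= Num.max M x by rewrite le_max lexx orbT.
have h2 : M <= Num.max M x by rewrite le_max lexx.
have xb : x < b by rewrite /b; lra.
have Mb : M < b by rewrite /b; lra.
have [c0 c0in c0min] : exists2 c, c \in `[x, b] & forall t, t \in `[x, b] -> theta c <= theta t.
  apply: EVT_min; first exact: ltW.
  by apply: continuous_subspaceW hcont => z; rewrite /= !in_itv /= => /andP[->].
set c := theta c0 - y.
have c0x : x <= c0 by move: c0in; rewrite in_itv /= => /andP[].
have cpos : 0 < c by rewrite /c; have := hy _ c0x; lra.
set a := c / (b - x).
have apos : 0 < a by rewrite /a divr_gt0 // subr_gt0.
have ab : a * (b - x) = c by rewrite /a divfK // subr_eq0 gt_eqF.
have lowb : forall s, x <= s <= b -> a * (s - x) <= theta s - y.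
  move=> s /andP[xs sb].
  have := c0min s; rewrite in_itv /= xs sb => /(_ isT) h.
  have : a * (s - x) <= a * (b - x) by rewrite ler_pM2l //; lra.
  rewrite ab /c; lra.
have [T [Tb [Tk [T0 HT]]]] : exists T, [/\ b < T, 2 * x - 2 * y / a < T, 0 < T & `|theta T / T| < a / 2].
  have ha2 : 0 < a / 2 by rewrite divr_gt0.
  have H1 : \forall t \near +oo, `|theta t / t| < a / 2 by exact: (cvgr0Pnorm_lt _).1 hsub _ ha2.
  have H2 : \forall t \near +oo, Num.max (Num.max b (2 * x - 2 * y / a)) 0 < t.
    exact: nbhs_pinfty_gt (num_real _).
  have [T [HT1 HT2]] := filter_ex (filterI H1 H2).
  exists T; move: HT2; rewrite !gt_max => /andP[/andP[? ?] ?]; by split.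
have gT : theta T - y < a * (T - x).
  have e1 : theta T < a / 2 * T.
    move: HT; rewrite ltr_norml => /andP[_]; rewrite ltr_pdivrMr //.
  have e2 : a * (2 * x - 2 * y / a) < a * T by rewrite ltr_pM2l.
  have e3 : a * (2 * x - 2 * y / a) = 2 * (a * x) - 2 * y.
    by rewrite mulrBr mulrCA (mulrC 2 y) -mulrA (mulrCA a) mulfV ?gt_eqF // mulr1 mulrCA.
  have e4 : a / 2 * T = (a * T) / 2 by rewrite mulrAC.
  rewrite e4 in e1; rewrite e3 in e2.
  have e5 : a * T / 2 * 2 = a * T by rewrite divfK // pnatr_eq0.
  rewrite mulrBr; lra.
pose g t := (theta t - y) / (t - x).
have [ts tsin tsmin] : exists2 c, c \in `[b, T] & forall t, t \in `[b, T] -> g c <= g t.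
  apply: EVT_min; first exact: ltW.
  apply: continuous_subspace_itv => t; rewrite in_itv /= => /andP[bt _].
  have xt : x < t by lra.
  apply: cvgM.
    apply: cvgB; last exact: cvg_cst.
    by apply: hin; rewrite in_itv /= andbT.
  apply: cvgV; first by rewrite subr_eq0 gt_eqF.
  apply: cvgB; [exact: cvg_id | exact: cvg_cst].
move: tsin; rewrite in_itv /= => /andP[bts tsT].
have gTa : g T < a by rewrite /g ltr_pdivrMr ?subr_gt0 //; lra.
have gtsa : g ts < a.
  have := tsmin T; rewrite in_itv /= lexx andbT => /(_ (ltW Tb)); lra.
suff : ts <= M by lra.
apply: hM; split; first lra.
move=> s /andP[xs sts]; rewrite -/(g ts).
have [sb|bs] := leP s b.
- have := lowb s; rewrite xs sb => /(_ isT) h.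
  have : g ts * (s - x) <= a * (s - x) by rewrite ler_wpM2r ?subr_ge0 // ltW.
  lra.
- have := tsmin s; rewrite in_itv /= (ltW bs) /= => /(_ (le_trans sts tsT)) h.
  have : g ts * (s - x) <= g s * (s - x) by rewrite ler_wpM2r ?subr_ge0.
  rewrite /g divfK ?subr_eq0 ?gt_eqF //; lra.
Qed.
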